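(* Let $\tau$ be a $\sigma$-maxitive measure on a $\sigma$-algebra $\mathcal{B}$ of subsets of a nonempty set $E$. Then the following are equivalent: - $\tau$ has the Radon–Nikodym property with respect to the Shilkret integral, i.e. every $\sigma$-maxitive measure $\nu$ on $\mathcal{B}$ with $\nu\ll\tau$ admits a $\mathcal{B}$-measurable $c:E\to[0,\infty]$ with $\nu(B)=\sup_{t\ge0} t\cdot\tau(B\cap\{c>t\})$ for all $B\in\mathcal{B}$; - $\tau$ is $\sigma$-finite and $\sigma$-principal.
   Context: Multiplication on $[0,\infty]$ is the usual one, with the convention $0\cdot\infty=\infty\cdot0=0$. A $\sigma$-maxitive measure on $\mathcal{B}$ is a map $\nu:\mathcal{B}\to[0,\infty]$ with $\nu(\emptyset)=0$ and $\nu(\bigcup_j B_j)=\sup_j\nu(B_j)$ for every countable family $(B_j)$ in $\mathcal{B}$. A map $f:E\to[0,\infty]$ is $\mathcal{B}$-measurable if $\{f>t\}\in\mathcal{B}$ for all $t\in[0,\infty)$. Absolute continuity: $\nu\ll\tau$ means $\nu(B)\le\infty\cdot\tau(B)$ for every $B\in\mathcal{B}$ with $\tau(B)<\infty$; equivalently, $\tau(B)=0$ implies $\nu(B)=0$ for such $B$. $\tau$ is $\sigma$-finite if $E$ is covered by countably many $B_n\in\mathcal{B}$ with $\tau(B_n)<\infty$. A $\sigma$-ideal of $\mathcal{B}$ is a nonempty subfamily closed under countable unions and under passing to measurable subsets. A set is $\tau$-negligible if it is contained in some $B\in\mathcal{B}$ with $\tau(B)=0$. $\tau$ is $\sigma$-principal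 if for every $\sigma$-ideal $\mathcal{I}$ of $\mathcal{B}$ there is $L\in\mathcal{I}$ such that $S\setminus L$ is $\tau$-negligible for all $S\in\mathcal{I}$. *)

(* Defs.v *)
From Stdlib Require Import Reals.
Open Scope R_scope.

(* Extended reals used for values in [0, +oo]; nonnegativity is imposed
   explicitly where needed. *)
Inductive xR : Type := Fin (r : R) | PInf.

Definition xle (a b : xR) : Prop :=
  match a, b with
  | _, PInf => True
  | PInf, Fin _ => False
  | Fin x, Fin y => x <= y
  end.

Definition xlt (a b : xR) : Prop :=
  match a, b with
  | Fin x, PInf => True
  | PInf, _ => False
  | Fin x, Fin y => x < y
  end.

(* multiplication on [0,oo] with 0 * oo = oo * 0 = 0 *)
Definition xmul (a b : xR) : xR :=
  match a, b with
  | Fin x, Fin y => Fin (x * y)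
  | Fin x, PInf => if Req_EM_T x 0 then Fin 0 else PInf
  | PInf, Fin y => if Req_EM_T y 0 then Fin 0 else PInf
  | PInf, PInf => PInf
  end.

Definition is_sup (S : xR -> Prop) (s : xR) : Prop :=
  (forall v, S v -> xle v s) /\
  (forall u, (forall v, S v -> xle v u) -> xle s u).

Definition set (E : Type) := E -> Prop.

Definition sigma_algebra {E : Type} (B : set E -> Prop) : Prop :=
  B (fun _ => True) /\
  (forall A, B A -> B (fun x => ~ A x)) /\
  (forall A : nat -> set E, (forall n, B (A n)) -> B (fun x => exists n, A n x)).

Definition sigma_maxitive {E : Type} (B : set E -> Prop) (nu : set E -> xR) : Prop :=
  (forall A, B A -> xle (Fin 0) (nu A)) /\
  nu (fun _ => False) = Fin 0 /\
  (forall A : nat -> set E, (forall n, B (A n)) ->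
     is_sup (fun v => exists n, v = nu (A n)) (nu (fun x => exists n, A n x))).

Definition measurable_fun {E : Type} (B : set E -> Prop) (c : E -> xR) : Prop :=
  (forall x, xle (Fin 0) (c x)) /\
  (forall t, 0 <= t -> B (fun x => xlt (Fin t) (c x))).

Definition abs_cont {E : Type} (B : set E -> Prop) (nu tau : set E -> xR) : Prop :=
  forall A, B A -> xlt (tau A) PInf -> xle (nu A) (xmul PInf (tau A)).

Definition RN_property {E : Type} (B : set E -> Prop) (tau : set E -> xR) : Prop :=
  forall nu : set E -> xR, sigma_maxitive B nu -> abs_cont B nu tau ->
    exists c : E -> xR, measurable_fun B c /\
      forall A, B A ->
        is_sup (fun v => exists t, 0 <= t /\
                  v = xmul (Fin t) (tau (fun x => A x /\ xlt (Fin t) (c x))))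
               (nu A).

Definition sigma_finite {E : Type} (B : set E -> Prop) (tau : set E -> xR) : Prop :=
  exists A : nat -> set E, (forall n, B (A n)) /\ (forall n, xlt (tau (A n)) PInf) /\
    (forall x, exists n, A n x).

Definition sigma_ideal {E : Type} (B : set E -> Prop) (I : set E -> Prop) : Prop :=
  (forall A, I A -> B A) /\
  (exists A, I A) /\
  (forall A : nat -> set E, (forall n, I (A n)) -> I (fun x => exists n, A n x)) /\
  (forall S A, I S -> B A -> (forall x, A x -> S x) -> I A).

Definition negligible {E : Type} (B : set E -> Prop) (tau : set E -> xR) (N : set E) : Prop :=
  exists A, B A /\ tau A = Fin 0 /\ (forall x, N x -> A x).

Definition sigma_principal {E : Type} (B : set E -> Prop) (tau : set E -> xR) : Prop :=
  forall I, sigma_ideal B I ->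
    exists L, I L /\ forall S, I S -> negligible B tau (fun x => S x /\ ~ L x).

(* Main.v *)
Require Import Defs.
From Stdlib Require Import Reals ZArith Lra Lia Classical ClassicalEpsilon FunctionalExtensionality PropExtensionality.
Open Scope R_scope.

Lemma sext {E} (P Q : set E) : (forall x, P x <-> Q x) -> P = Q.
Proof. intro H. apply functional_extensionality; intro x; apply propositional_extensionality; auto. Qed.

Lemma xle_refl a : xle a a.
Proof. destruct a; simpl; auto; lra. Qed.

Lemma xle_trans a b c : xle a b -> xle b c -> xle a c.
Proof. destruct a, b, c; simpl; auto; try lra; tauto. Qed.

Lemma xle_antisym a b : xle a b -> xle b a -> a = b.
Proof. destruct a, b; simpl; intros; try tauto. f_equal; lra. Qed.

Lemma xle_total a b : xle a b \/ xle b a.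
Proof. destruct a, b; simpl; auto. lra. Qed.

Lemma xnle_lt a b : ~ xle a b -> xlt b a.
Proof. destruct a, b; simpl; intros; try tauto; lra. Qed.

Lemma xlt_nle a b : xlt b a -> ~ xle a b.
Proof. destruct a, b; simpl; intros; try tauto; lra. Qed.

Lemma xmul_0l v : xmul (Fin 0) v = Fin 0.
Proof. destruct v; simpl. f_equal; ring. destruct (Req_EM_T 0 0); auto; lra. Qed.

Lemma xmul_Pinf t : t <> 0 -> xmul (Fin t) PInf = PInf.
Proof. intros; simpl. destruct (Req_EM_T t 0); tauto. Qed.

Lemma xmul_PInf_fin y : xmul PInf (Fin y) = if Req_EM_T y 0 then Fin 0 else PInf.
Proof. reflexivity. Qed.

Lemma xmul_mono t a b : 0 <= t -> xle (Fin 0) a -> xle a b ->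
  xle (xmul (Fin t) a) (xmul (Fin t) b).
Proof.
  intros Ht Ha Hab; destruct a, b; simpl in *; try tauto.
  - nra.
  - destruct (Req_EM_T t 0); simpl; auto. subst. lra.
  - apply xle_refl.
Qed.

Lemma xmul_mono_t t t' a : 0 <= t -> t <= t' -> xle (Fin 0) a ->
  xle (xmul (Fin t) a) (xmul (Fin t') a).
Proof.
  intros Ht Htt Ha; destruct a; simpl in *.
  - nra.
  - destruct (Req_EM_T t 0); destruct (Req_EM_T t' 0); simpl; auto; lra.
Qed.

Lemma xmul_nonneg t a : 0 <= t -> xle (Fin 0) a -> xle (Fin 0) (xmul (Fin t) a).
Proof.
  intros Ht Ha; destruct a; simpl in *.
  - nra.
  - destruct (Req_EM_T t 0); simpl; auto; lra.
Qed.

Lemma B_compl {E} (B : set E -> Prop) A : sigma_algebra B -> B A -> B (fun x => ~ A x).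
Proof. intros [_ [H _]] HA; auto. Qed.

Lemma B_full {E} (B : set E -> Prop) : sigma_algebra B -> B (fun _ => True).
Proof. intros [H _]; auto. Qed.

Lemma B_cunion {E} (B : set E -> Prop) (A : nat -> set E) : sigma_algebra B ->
  (forall n, B (A n)) -> B (fun x => exists n, A n x).
Proof. intros [_ [_ H]]; auto. Qed.

Lemma B_ext {E} (B : set E -> Prop) P Q : B P -> (forall x, P x <-> Q x) -> B Q.
Proof. intros HP H. rewrite <- (sext P Q H). auto. Qed.

Definition seq2 {E} (A C : set E) : nat -> set E := fun n => match n with O => A | _ => C end.

Lemma seq2_union {E} (A C : set E) x : (exists n, seq2 A C n x) <-> (A x \/ C x).
Proof.
  split. intros [[|n] H]; simpl in H; auto.
  intros [H|H]. exists O; auto. exists 1%nat; auto.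
Qed.

Lemma B_union {E} (B : set E -> Prop) A C : sigma_algebra B -> B A -> B C -> B (fun x => A x \/ C x).
Proof.
  intros HB HA HC. apply (B_ext B (fun x => exists n, seq2 A C n x)).
  apply B_cunion; auto. intros [|n]; simpl; auto. apply seq2_union.
Qed.

Lemma B_empty {E} (B : set E -> Prop) : sigma_algebra B -> B (fun _ => False).
Proof. intros HB. apply (B_ext B (fun x => ~ True)). apply (B_compl B (fun _ => True)); auto. apply B_full; auto. tauto. Qed.

Lemma B_inter {E} (B : set E -> Prop) A C : sigma_algebra B -> B A -> B C -> B (fun x => A x /\ C x).
Proof.
  intros HB HA HC. apply (B_ext B (fun x => ~ ((~ A x) \/ (~ C x)))).
  apply (B_compl B (fun x => (~ A x) \/ (~ C x))); auto. apply B_union; auto; apply B_compl; auto.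
  intro x; tauto.
Qed.

Lemma B_diff {E} (B : set E -> Prop) A C : sigma_algebra B -> B A -> B C -> B (fun x => A x /\ ~ C x).
Proof. intros. apply B_inter; auto. apply B_compl; auto. Qed.

Lemma mu_nonneg {E} B (mu : set E -> xR) A : sigma_maxitive B mu -> B A -> xle (Fin 0) (mu A).
Proof. intros [H _]; auto. Qed.

Lemma mu_empty {E} B (mu : set E -> xR) A : sigma_maxitive B mu -> (forall x, ~ A x) -> mu A = Fin 0.
Proof. intros [_ [H _]] HA. rewrite (sext A (fun _ => False)); auto. firstorder. Qed.

Lemma mu_cunion_le {E} B (mu : set E -> xR) (A : nat -> set E) w : sigma_maxitive B mu ->
  (forall n, B (A n)) -> (forall n, xle (mu (A n)) w) -> xle (mu (fun x => exists n, A n x)) w.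
Proof.
  intros [_ [_ H]] HA Hw. destruct (H A HA) as [_ H2]. apply H2. intros v [n ->]; auto.
Qed.

Lemma mu_cunion_ge {E} B (mu : set E -> xR) (A : nat -> set E) n : sigma_maxitive B mu ->
  (forall n, B (A n)) -> xle (mu (A n)) (mu (fun x => exists n, A n x)).
Proof.
  intros [_ [_ H]] HA. destruct (H A HA) as [H1 _]. apply H1. eauto.
Qed.

Lemma mu_union_le {E} B (mu : set E -> xR) A C w : sigma_maxitive B mu -> B A -> B C ->
  xle (mu A) w -> xle (mu C) w -> xle (mu (fun x => A x \/ C x)) w.
Proof.
  intros Hm HA HC H1 H2.
  rewrite <- (sext _ _ (seq2_union A C)).
  apply (mu_cunion_le B); auto; intros [|n]; simpl; auto.
Qed.

Lemma mu_mono {E} B (mu : set E -> xR) A C : sigma_maxitive B mu -> B A -> B C ->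
  (forall x, A x -> C x) -> xle (mu A) (mu C).
Proof.
  intros Hm HA HC Hs.
  assert (Heq : C = (fun x => exists n, seq2 A C n x)).
  { apply sext. intro x. rewrite seq2_union. firstorder. }
  rewrite Heq. apply (mu_cunion_ge B mu (seq2 A C) 0); auto.
  intros [|n]; simpl; auto.
Qed.

Lemma mu_zero_of_le {E} B (mu : set E -> xR) A : sigma_maxitive B mu -> B A ->
  xle (mu A) (Fin 0) -> mu A = Fin 0.
Proof. intros. apply xle_antisym; auto. eapply mu_nonneg; eauto. Qed.

Definition zo {E} (Z : set E -> Prop) (A : set E) : xR :=
  if excluded_middle_informative (Z A) then Fin 0 else Fin 1.

Lemma zo_le1 {E} (Z : set E -> Prop) A : xle (zo Z A) (Fin 1).
Proof. unfold zo; destruct excluded_middle_informative; simpl; lra. Qed.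

Lemma zo_maxitive {E} (B : set E -> Prop) (Z : set E -> Prop) :
  Z (fun _ => False) ->
  (forall A : nat -> set E, (forall n, B (A n)) ->
     (Z (fun x => exists n, A n x) <-> forall n, Z (A n))) ->
  sigma_maxitive B (zo Z).
Proof.
  intros H0 HU. split; [|split].
  - intros A _; unfold zo; destruct excluded_middle_informative; simpl; lra.
  - unfold zo; destruct excluded_middle_informative; tauto.
  - intros A HA. destruct (classic (Z (fun x => exists n, A n x))) as [Hz|Hz].
    + assert (Hall := proj1 (HU A HA) Hz).
      unfold zo at 2. destruct excluded_middle_informative; [|tauto].
      split.
      * intros v [n ->]. unfold zo; destruct excluded_middle_informative; simpl; [lra|].
        exfalso; auto.
      * intros u Hu. specialize (Hu (zo Z (A 0%nat)) (ex_intro _ 0%nat eq_refl)).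
        unfold zo in Hu; destruct excluded_middle_informative; auto. exfalso; auto.
    + assert (Hn : exists n, ~ Z (A n)).
      { apply not_all_ex_not. intro H. apply Hz. apply HU; auto. }
      destruct Hn as [n Hn].
      unfold zo at 2. destruct excluded_middle_informative; [tauto|].
      split.
      * intros v [k ->]. apply zo_le1.
      * intros u Hu. specialize (Hu (zo Z (A n)) (ex_intro _ n eq_refl)).
        unfold zo in Hu; destruct excluded_middle_informative; auto. tauto.
Qed.

Lemma zo_zero {E} (Z : set E -> Prop) A : xle (zo Z A) (Fin 0) -> Z A.
Proof. unfold zo; destruct excluded_middle_informative; simpl; auto; lra. Qed.

Lemma zo_zero' {E} (Z : set E -> Prop) A : Z A -> zo Z A = Fin 0.
Proof. unfold zo; destruct excluded_middle_informative; simpl; auto; tauto. Qed.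

Definition RNeq {E} (tau : set E -> xR) (c : E -> xR) (A : set E) (v : xR) :=
  is_sup (fun v => exists t, 0 <= t /\
                  v = xmul (Fin t) (tau (fun x => A x /\ xlt (Fin t) (c x)))) v.

Lemma RN_below0 {E} (B : set E -> Prop) tau c : sigma_maxitive B tau ->
  RNeq tau c (fun x => ~ xlt (Fin 0) (c x)) (Fin 0).
Proof.
  intros Ht. split.
  - intros v [t [Ht0 ->]]. rewrite (mu_empty B tau); auto.
    + destruct (Req_EM_T t 0). subst; rewrite xmul_0l; simpl; lra. simpl. lra.
    + intros x [H1 H2]. apply H1. destruct (c x); simpl in *; auto; lra.
  - intros u Hu. specialize (Hu (xmul (Fin 0) (tau (fun x => (fun x => ~ xlt (Fin 0) (c x)) x /\ xlt (Fin 0) (c x))))).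
    rewrite xmul_0l in Hu. apply Hu. exists 0. split; [lra|]. rewrite xmul_0l; auto.
Qed.

Lemma RN_zero_level {E} (B : set E -> Prop) tau c A v t : sigma_algebra B -> sigma_maxitive B tau ->
  measurable_fun B c -> B A -> RNeq tau c A v -> xle v (Fin 0) -> 0 < t ->
  tau (fun x => A x /\ xlt (Fin t) (c x)) = Fin 0.
Proof.
  intros HB Htau Hc HA [H1 _] Hv Ht.
  assert (Hle := xle_trans _ _ _ (H1 _ (ex_intro _ t (conj (Rlt_le _ _ Ht) eq_refl))) Hv).
  assert (Hnn : xle (Fin 0) (tau (fun x => A x /\ xlt (Fin t) (c x)))).
  { eapply mu_nonneg; eauto. apply B_inter; auto. apply Hc; lra. }
  destruct (tau (fun x => A x /\ xlt (Fin t) (c x))) eqn:Heq.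
  - simpl in *. f_equal. nra.
  - rewrite xmul_Pinf in Hle; simpl in Hle; [tauto|lra].
Qed.

Lemma is_sup_unique (S : xR -> Prop) a b : is_sup S a -> is_sup S b -> a = b.
Proof. intros [H1 H2] [H3 H4]. apply xle_antisym; auto. Qed.

Lemma arch_inv r : 0 < r -> exists k : nat, / (INR k + 1) < r.
Proof.
  intros Hr. destruct (archimed_cor1 r Hr) as [N [HN HN0]].
  exists (pred N). rewrite <- S_INR. rewrite Nat.succ_pred_pos; auto.
Qed.

Lemma inv_pos_k k : 0 < / (INR k + 1).
Proof. apply Rinv_0_lt_compat. pose proof (pos_INR k). lra. Qed.

Lemma xR_pos_level (v : xR) : xlt (Fin 0) v -> exists k : nat, xlt (Fin (/ (INR k + 1))) v.
Proof.
  destruct v as [r|]; simpl; intros H.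
  - destruct (arch_inv r H) as [k Hk]; eauto.
  - exists 0%nat; auto.
Qed.

Lemma RN_sigma_finite {E} (B : set E -> Prop) tau : sigma_algebra B -> sigma_maxitive B tau ->
  RN_property B tau -> sigma_finite B tau.
Proof.
  intros HB Htau HRN.
  set (Z := fun A : set E => tau A = Fin 0).
  assert (Hm : sigma_maxitive B (zo Z)).
  { apply zo_maxitive.
    - unfold Z. apply Htau.
    - intros A HA. unfold Z. split.
      + intros H n. apply (mu_zero_of_le B); auto. rewrite <- H.
        apply (mu_cunion_ge B); auto.
      + intros H. apply (mu_zero_of_le B); auto. apply B_cunion; auto.
        apply (mu_cunion_le B); auto. intros n; rewrite H; apply xle_refl. }
  assert (Hac : abs_cont B (zo Z) tau).
  { intros A HA Hf. destruct (classic (Z A)) as [Hz|Hz].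
    - rewrite (zo_zero' _ _ Hz). unfold Z in Hz; rewrite Hz. simpl.
      destruct (Req_EM_T 0 0); simpl; lra.
    - destruct (tau A) as [y|] eqn:Hy; simpl in Hf; [|tauto].
      simpl. destruct (Req_EM_T y 0) as [e|e]. exfalso; apply Hz; unfold Z; rewrite Hy, e; reflexivity. unfold zo; destruct excluded_middle_informative; simpl; auto. }
  destruct (HRN _ Hm Hac) as [c [Hc HR]].
  set (A := fun n : nat => match n with
                           | O => fun x => ~ xlt (Fin 0) (c x)
                           | S k => fun x => xlt (Fin (/ (INR k + 1))) (c x) end).
  exists A. split; [|split].
  - intros [|k]; simpl.
    + apply (B_compl B (fun x => xlt (Fin 0) (c x))); auto. apply Hc; lra.
    + apply Hc. left; apply inv_pos_k.
  - intros [|k]; simpl.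
    + assert (HB0 : B (fun x => ~ xlt (Fin 0) (c x))).
      { apply (B_compl B (fun x => xlt (Fin 0) (c x))); auto. apply Hc; lra. }
      pose proof (is_sup_unique _ _ _ (HR _ HB0) (RN_below0 B tau c Htau)) as Hz.
      assert (Hz' : Z (fun x => ~ xlt (Fin 0) (c x))).
      { apply zo_zero. rewrite Hz; apply xle_refl. }
      unfold Z in Hz'. change (xlt (tau (fun x => ~ xlt (Fin 0) (c x))) PInf). rewrite Hz'. simpl; auto.
    + change (xlt (tau (fun x => xlt (Fin (/ (INR k + 1))) (c x))) PInf).
      destruct (HR (fun _ => True) (B_full B HB)) as [H1 _].
      set (t := / (INR k + 1)).
      assert (Ht : 0 < t) by apply inv_pos_k.
      specialize (H1 _ (ex_intro _ t (conj (Rlt_le _ _ Ht) eq_refl))).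
      pose proof (xle_trans _ _ _ H1 (zo_le1 Z _)) as H2.
      rewrite (sext (fun x => True /\ xlt (Fin t) (c x)) (fun x => xlt (Fin t) (c x))) in H2 by tauto.
      destruct (tau (fun x => xlt (Fin t) (c x))); [simpl; auto|].
      rewrite xmul_Pinf in H2; simpl in H2; [tauto|lra].
  - intros x. destruct (classic (xlt (Fin 0) (c x))) as [H|H].
    + destruct (xR_pos_level _ H) as [k Hk]. exists (S k); simpl; auto.
    + exists O; simpl; auto.
Qed.

Lemma choice_nat {T} (P : nat -> T -> Prop) : (forall n, exists x, P n x) -> exists f, forall n, P n (f n).
Proof.
  intros H. exists (fun n => proj1_sig (constructive_indefinite_description _ (H n))).
  intros n. exact (proj2_sig (constructive_indefinite_description _ (H n))).
Qed.

Lemma negl_cunion {E} (B : set E -> Prop) tau (N : nat -> set E) : sigma_algebra B -> sigma_maxitive B tau ->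
  (forall n, negligible B tau (N n)) -> negligible B tau (fun x => exists n, N n x).
Proof.
  intros HB Htau H. destruct (choice_nat _ H) as [M HM].
  exists (fun x => exists n, M n x). split; [|split].
  - apply B_cunion; auto. intro n; apply HM.
  - apply (mu_zero_of_le B); auto. apply B_cunion; auto. intro n; apply HM.
    apply (mu_cunion_le B); auto. intro n; apply HM. intro n; destruct (HM n) as [_ [-> _]]; apply xle_refl.
  - intros x [n Hn]. exists n. apply (HM n); auto.
Qed.

Lemma negl_empty {E} (B : set E -> Prop) tau (N : set E) : sigma_algebra B -> sigma_maxitive B tau ->
  (forall x, ~ N x) -> negligible B tau N.
Proof.
  intros HB Htau H. exists (fun _ => False). split; [|split].
  apply B_empty; auto. apply Htau. intros x Hx; exact (H x Hx).
Qed.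

Lemma negl_sub {E} (B : set E -> Prop) tau (N N' : set E) :
  negligible B tau N -> (forall x, N' x -> N x) -> negligible B tau N'.
Proof. intros [A [H1 [H2 H3]]] H. exists A; auto. Qed.

Lemma RN_sigma_principal {E} (B : set E -> Prop) tau : sigma_algebra B -> sigma_maxitive B tau ->
  RN_property B tau -> sigma_principal B tau.
Proof.
  intros HB Htau HRN I HI.
  destruct HI as [HIB [[S00 HS00] [HIU HIH]]].
  set (Z := fun A : set E => exists S, I S /\ negligible B tau (fun x => A x /\ ~ S x)).
  assert (Hm : sigma_maxitive B (zo Z)).
  { apply zo_maxitive.
    - exists S00; split; auto. apply negl_empty; auto. tauto.
    - intros A HA. unfold Z. split.
      + intros [S [HS HN]] n. exists S; split; auto. apply (negl_sub _ _ _ _ HN). firstorder.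
      + intros H. destruct (choice_nat _ H) as [S HS].
        exists (fun x => exists n, S n x). split. apply HIU; intro n; apply HS.
        apply (negl_sub _ _ (fun x => exists n, A n x /\ ~ S n x)).
        apply negl_cunion; auto. intro n; apply HS.
        intros x [[n Hn] Hx]. exists n. split; auto. intro; apply Hx; eauto. }
  assert (Hac : abs_cont B (zo Z) tau).
  { intros A HA Hf. destruct (classic (tau A = Fin 0)) as [Hz|Hz].
    - rewrite zo_zero'. rewrite Hz. simpl. destruct (Req_EM_T 0 0); simpl; lra.
      exists S00; split; auto. exists A; repeat split; auto. tauto.
    - destruct (tau A) as [y|] eqn:Hy; simpl in Hf; [|tauto].
      simpl. destruct (Req_EM_T y 0) as [e|e]. subst; tauto. unfold zo; destruct excluded_middle_informative; simpl; auto. }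
  destruct (HRN _ Hm Hac) as [c [Hc HR]].
  assert (HB0 : B (fun x => ~ xlt (Fin 0) (c x))).
  { apply (B_compl B (fun x => xlt (Fin 0) (c x))); auto. apply Hc; lra. }
  pose proof (is_sup_unique _ _ _ (HR _ HB0) (RN_below0 B tau c Htau)) as Hz.
  assert (Hz' : Z (fun x => ~ xlt (Fin 0) (c x))).
  { apply zo_zero. rewrite Hz; apply xle_refl. }
  destruct Hz' as [S0 [HS0 HN0]].
  exists S0; split; auto.
  intros Sx HS.
  assert (HSz : zo Z Sx = Fin 0).
  { apply zo_zero'. exists Sx; split; auto. apply negl_empty; auto. tauto. }
  set (N := fun n : nat => match n with
                           | O => fun x => ~ xlt (Fin 0) (c x) /\ ~ S0 x
                           | S k => fun x => Sx x /\ xlt (Fin (/ (INR k + 1))) (c x) end).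
  apply (negl_sub _ _ (fun x => exists n, N n x)).
  - apply negl_cunion; auto. intros [|k]; simpl; auto.
    exists (fun x => Sx x /\ xlt (Fin (/ (INR k + 1))) (c x)). split; [|split]; auto.
    + apply B_inter; auto. apply Hc. left; apply inv_pos_k.
    + apply (RN_zero_level B tau c Sx (zo Z Sx) _ HB Htau Hc (HIB _ HS) (HR _ (HIB _ HS))). rewrite HSz; apply xle_refl. apply inv_pos_k.
  - intros x [HSx HS0x]. destruct (classic (xlt (Fin 0) (c x))) as [H|H].
    + destruct (xR_pos_level _ H) as [k Hk]. exists (S k); simpl; auto.
    + exists O; simpl; auto.
Qed.

Lemma xmul_div_le q a b : 0 < q -> xle (Fin 0) a -> xle (Fin 0) b ->
  xle a (xmul (Fin (/ q)) b) -> xle (xmul (Fin q) a) b.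
Proof.
  intros Hq Ha Hb H. assert (Hiq : 0 < / q) by (apply Rinv_0_lt_compat; auto).
  destruct a as [x|], b as [y|]; simpl in *; auto.
  - apply (Rmult_le_compat_l q) in H; [|lra].
    replace (q * (/ q * y)) with y in H by (field; lra). exact H.
  - destruct (Req_EM_T (/ q) 0); simpl in H; try lra.
  - destruct (Req_EM_T q 0); simpl; auto.
Qed.

Lemma xmul_le_div q a b : 0 < q -> xle (Fin 0) a -> xle (Fin 0) b ->
  xle (xmul (Fin q) a) b -> xle a (xmul (Fin (/ q)) b).
Proof.
  intros Hq Ha Hb H. assert (Hiq : 0 < / q) by (apply Rinv_0_lt_compat; auto).
  destruct a as [x|], b as [y|]; simpl in *; auto.
  - apply (Rmult_le_compat_l (/ q)) in H; [|lra].
    replace (/ q * (q * x)) with x in H by (field; lra). exact H.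
  - destruct (Req_EM_T (/ q) 0); simpl; auto; lra.
  - destruct (Req_EM_T q 0); simpl in H; lra.
  - destruct (Req_EM_T (/ q) 0); simpl; auto; lra.
Qed.

Lemma scale_sup {E} (B : set E -> Prop) tau nu q (P : nat -> set E) :
  sigma_algebra B -> sigma_maxitive B tau -> sigma_maxitive B nu -> 0 <= q ->
  (forall n, B (P n)) ->
  (forall n, xle (xmul (Fin q) (tau (P n))) (nu (P n))) ->
  xle (xmul (Fin q) (tau (fun x => exists n, P n x))) (nu (fun x => exists n, P n x)).
Proof.
  intros HB Ht Hn Hq HP H.
  assert (HU : B (fun x => exists n, P n x)) by (apply B_cunion; auto).
  destruct (Req_dec q 0) as [->|Hq0].
  - rewrite xmul_0l. eapply mu_nonneg; eauto.
  - apply xmul_div_le; [lra| eapply mu_nonneg; eauto | eapply mu_nonneg; eauto |].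
    apply (mu_cunion_le B); auto. intro n.
    apply xle_trans with (xmul (Fin (/ q)) (nu (P n))).
    + apply xmul_le_div; [lra| eapply mu_nonneg; eauto | eapply mu_nonneg; eauto | auto].
    + apply xmul_mono. left; apply Rinv_0_lt_compat; lra. eapply mu_nonneg; eauto.
      apply (mu_cunion_ge B); auto.
Qed.

Definition Hq {E} (B : set E -> Prop) (tau nu : set E -> xR) (q : R) : set E -> Prop :=
  fun C => B C /\ forall C', B C' -> (forall x, C' x -> C x) -> xle (xmul (Fin q) (tau C')) (nu C').

Lemma Hq_ideal {E} (B : set E -> Prop) tau nu q :
  sigma_algebra B -> sigma_maxitive B tau -> sigma_maxitive B nu -> 0 <= q ->
  sigma_ideal B (Hq B tau nu q).
Proof.
  intros HB Ht Hn Hq. split; [|split; [|split]].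
  - intros A [H _]; auto.
  - exists (fun _ => False). split. apply B_empty; auto.
    intros C' HC' Hs. rewrite (mu_empty B tau C'); auto. simpl. rewrite Rmult_0_r.
    eapply mu_nonneg; eauto.
  - intros A HA. split. apply B_cunion; auto. intro n; apply HA.
    intros C' HC' Hs.
    set (P := fun n x => C' x /\ A n x).
    assert (HP : forall n, B (P n)). { intro n. apply B_inter; auto. apply HA. }
    assert (Heq : C' = (fun x => exists n, P n x)).
    { apply sext. intro x. unfold P. split. intro H. destruct (Hs x H) as [n Hn0]; eauto.
      intros [n [H _]]; auto. }
    rewrite Heq. apply scale_sup with B; auto.
    intro n. apply (HA n); auto. intros x [_ H]; auto.
  - intros S A [HS HS2] HA Hs. split; [apply HA|].
    intros C' HC' Hs'. apply HS2; auto.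
Qed.

Lemma Hq_mono {E} (B : set E -> Prop) tau nu t q C :
  sigma_maxitive B tau -> 0 <= t -> t <= q -> Hq B tau nu q C -> Hq B tau nu t C.
Proof.
  intros Ht Ht0 Htq [HC H]. split; auto. intros C' HC' Hs.
  apply xle_trans with (xmul (Fin q) (tau C')); auto.
  apply xmul_mono_t; auto. eapply mu_nonneg; eauto.
Qed.

Definition dd (n m : nat) : R := INR n / (INR m + 1).

Lemma dd_nonneg n m : 0 <= dd n m.
Proof.
  unfold dd. pose proof (pos_INR n). pose proof (pos_INR m).
  apply Rmult_le_pos; auto. left; apply Rinv_0_lt_compat; lra.
Qed.

Lemma density a b : 0 <= a -> a < b -> exists n m, a < dd n m < b.
Proof.
  intros Ha Hab. destruct (arch_inv (b - a)) as [m Hm]; [lra|].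
  set (K := INR m + 1). assert (HK : 0 < K) by (unfold K; pose proof (pos_INR m); lra).
  assert (HK2 : 1 < K * (b - a)).
  { unfold K in *. apply (Rmult_lt_compat_l K) in Hm; auto. unfold K in Hm.
    rewrite Rinv_r in Hm; lra. }
  destruct (archimed (a * K)) as [H1 H2].
  assert (Hpos : (0 < up (a * K))%Z).
  { apply lt_IZR. simpl. pose proof (Rmult_le_pos a K Ha (Rlt_le _ _ HK)). lra. }
  exists (Z.to_nat (up (a * K))), m.
  unfold dd. rewrite INR_IZR_INZ. rewrite Z2Nat.id by lia.
  fold K. split.
  - apply (Rmult_lt_reg_r K); auto. unfold Rdiv. rewrite Rmult_assoc, Rinv_l by lra. lra.
  - apply (Rmult_lt_reg_r K); auto. unfold Rdiv. rewrite Rmult_assoc, Rinv_l by lra. nra.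
Qed.

Definition Sx {E} (V : nat -> nat -> set E) (x : E) : R -> Prop :=
  fun r => r = 0 \/ exists n m, V n m x /\ r = dd n m.

Definition cfun {E} (V : nat -> nat -> set E) (x : E) : xR :=
  match excluded_middle_informative (bound (Sx V x)) with
  | left Hb => Fin (proj1_sig (completeness (Sx V x) Hb (ex_intro _ 0 (or_introl eq_refl))))
  | right _ => PInf
  end.

Lemma c_nonneg {E} (V : nat -> nat -> set E) x : xle (Fin 0) (cfun V x).
Proof.
  unfold cfun. destruct excluded_middle_informative as [Hb|Hb]; simpl; auto.
  destruct (completeness _ _ _) as [l [Hl1 Hl2]]. simpl. apply Hl1. left; auto.
Qed.

Lemma c_level {E} (V : nat -> nat -> set E) x t : 0 <= t ->
  (xlt (Fin t) (cfun V x) <-> exists n m, V n m x /\ t < dd n m).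
Proof.
  intros Ht. unfold cfun. destruct excluded_middle_informative as [Hb|Hb].
  - destruct (completeness _ _ _) as [l [Hl1 Hl2]]. simpl. split.
    + intros Htl. apply NNPP. intro Hno. assert (l <= t); [|lra].
      apply Hl2. intros r [->|[n [m [Hv ->]]]]; auto.
      apply Rnot_lt_le. intro. apply Hno; eauto.
    + intros [n [m [Hv Hlt]]]. assert (dd n m <= l); [|lra].
      apply Hl1. right; eauto.
  - simpl. split; auto. intros _. apply NNPP. intro Hno. apply Hb. exists t.
    intros r [->|[n [m [Hv ->]]]]; auto.
    apply Rnot_lt_le. intro. apply Hno; eauto.
Qed.

Lemma c_inf {E} (V : nat -> nat -> set E) x :
  cfun V x = PInf <-> forall k : nat, xlt (Fin (INR k)) (cfun V x).
Proof.
  split.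
  - intros -> k; simpl; auto.
  - intros H. destruct (cfun V x) as [v|] eqn:Hc; auto.
    destruct (archimed v) as [H1 _].
    assert (Hpos : (0 <= up v)%Z \/ (up v < 0)%Z) by lia.
    destruct Hpos as [Hp|Hn].
    + specialize (H (Z.to_nat (up v))). rewrite INR_IZR_INZ, Z2Nat.id in H by lia.
      simpl in H. lra.
    + specialize (H 0%nat). simpl in H. apply IZR_lt in Hn. lra.
Qed.

Lemma negl_tau0 {E} (B : set E -> Prop) tau N : sigma_algebra B -> sigma_maxitive B tau ->
  B N -> negligible B tau N -> tau N = Fin 0.
Proof.
  intros HB Ht HN [A [HA [H0 Hs]]]. apply (mu_zero_of_le B); auto.
  rewrite <- H0. apply (mu_mono B); auto.
Qed.

Lemma ac_zero {E} (B : set E -> Prop) tau nu A : sigma_maxitive B nu -> abs_cont B nu tau ->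
  B A -> tau A = Fin 0 -> nu A = Fin 0.
Proof.
  intros Hn Hac HA H0. apply (mu_zero_of_le B); auto.
  pose proof (Hac A HA) as H. rewrite H0 in H. specialize (H I).
  simpl in H. destruct (Req_EM_T 0 0); [exact H|lra].
Qed.

Lemma Wset_B {E} (B : set E -> Prop) (V : nat -> nat -> set E) t n m :
  sigma_algebra B -> B (V n m) -> B (fun x => V n m x /\ t < dd n m).
Proof.
  intros HB HV. destruct (Rlt_dec t (dd n m)) as [H|H].
  - apply (B_ext B (V n m)); auto. intuition.
  - apply (B_ext B (fun _ => False)); [apply B_empty; auto|]. intuition.
Qed.

Lemma G_eq {E} (V : nat -> nat -> set E) t : 0 <= t ->
  (fun x => xlt (Fin t) (cfun V x)) =
  (fun x => exists n, (fun x => exists m, V n m x /\ t < dd n m) x).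
Proof. intros Ht. apply sext. intro x. rewrite c_level; auto. reflexivity. Qed.

Lemma G_B {E} (B : set E -> Prop) (V : nat -> nat -> set E) t :
  sigma_algebra B -> (forall n m, B (V n m)) -> 0 <= t ->
  B (fun x => xlt (Fin t) (cfun V x)).
Proof.
  intros HB HV Ht. rewrite G_eq; auto. apply B_cunion; auto. intro n.
  apply B_cunion; auto. intro m. apply Wset_B; auto.
Qed.

Lemma Hq_empty {E} (B : set E -> Prop) tau nu q A :
  sigma_algebra B -> sigma_maxitive B tau -> sigma_maxitive B nu -> 0 <= q ->
  B A -> (forall x, ~ A x) -> Hq B tau nu q A.
Proof.
  intros HB Ht Hn Hq HA H. destruct (Hq_ideal B tau nu q HB Ht Hn Hq) as [_ [[S HS] [_ Hh]]].
  apply (Hh S A HS HA). intros x Hx; exfalso; exact (H x Hx).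
Qed.

Lemma G_H {E} (B : set E -> Prop) tau nu (V : nat -> nat -> set E) t :
  sigma_algebra B -> sigma_maxitive B tau -> sigma_maxitive B nu ->
  (forall n m, Hq B tau nu (dd n m) (V n m)) -> 0 <= t ->
  Hq B tau nu t (fun x => xlt (Fin t) (cfun V x)).
Proof.
  intros HB Ht Hn HV Ht0.
  destruct (Hq_ideal B tau nu t HB Ht Hn Ht0) as [_ [_ [Hu Hh]]].
  rewrite G_eq; auto. apply Hu. intro n. apply Hu. intro m.
  assert (HVB : B (V n m)) by apply (HV n m).
  destruct (Rlt_dec t (dd n m)) as [H|H].
  - apply (Hh (V n m)). apply (Hq_mono B tau nu t (dd n m)); auto. lra.
    apply Wset_B; auto. intuition.
  - apply Hq_empty; auto. apply Wset_B; auto. intros x [_ Hx]; auto.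
Qed.

Lemma lemD {E} (B : set E -> Prop) tau nu (V : nat -> nat -> set E) n m D :
  sigma_algebra B -> sigma_maxitive B tau -> sigma_maxitive B nu -> abs_cont B nu tau ->
  sigma_principal B tau ->
  (forall S, Hq B tau nu (dd n m) S -> negligible B tau (fun x => S x /\ ~ V n m x)) ->
  B D -> (forall x, D x -> ~ V n m x) ->
  xle (nu D) (xmul (Fin (dd n m)) (tau D)).
Proof.
  intros HB Ht Hn Hac Hpr HVp HD Hdisj.
  set (q := dd n m). assert (Hq0 : 0 <= q) by apply dd_nonneg.
  set (J := fun C => B C /\ exists M, B M /\ (forall x, C x -> M x) /\ (forall x, M x -> D x) /\
                                   xle (nu M) (xmul (Fin q) (tau M))).
  assert (HJ : sigma_ideal B J).
  { split; [|split; [|split]].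
    - intros A [H _]; auto.
    - exists (fun _ => False). split. apply B_empty; auto.
      exists (fun _ => False). split. apply B_empty; auto. split; [tauto|split; [tauto|]].
      rewrite (mu_empty B nu); auto. apply xmul_nonneg; auto. eapply mu_nonneg; eauto.
      apply B_empty; auto.
    - intros A HA. split. apply B_cunion; auto. intro k; apply HA.
      destruct (choice_nat (fun k M => B M /\ (forall x, A k x -> M x) /\ (forall x, M x -> D x) /\
                                   xle (nu M) (xmul (Fin q) (tau M))))
        as [M HM]. { intro k. apply (HA k). }
      assert (HMB : forall k, B (M k)) by (intro k; apply HM).
      exists (fun x => exists k, M k x). split; [apply B_cunion; auto|split; [|split]].
      + intros x [k Hk]. exists k. apply (HM k); auto.
      + intros x [k Hk]. apply (HM k); auto.
      + apply (mu_cunion_le B); auto. intro k.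
        apply xle_trans with (xmul (Fin q) (tau (M k))). apply (HM k).
        apply xmul_mono; auto. eapply mu_nonneg; eauto. apply (mu_cunion_ge B); auto.
    - intros S A [HS [M HM]] HA Hs. split; auto. exists M. intuition. }
  destruct (Hpr J HJ) as [L [[HLB [M0 [HM0B [HLM0 [HM0D HM0]]]]] HLp]].
  set (C := fun x => D x /\ ~ M0 x).
  assert (HCB : B C) by (apply B_diff; auto).
  assert (HC0 : tau C = Fin 0).
  { destruct (classic (Hq B tau nu q C)) as [HqC|HqC].
    - apply negl_tau0 with B; auto. apply (negl_sub _ _ _ _ (HVp C HqC)).
      intros x Hx. split; auto. apply Hdisj. apply Hx.
    - exfalso. apply HqC. split; auto. intros C' HC' Hs. apply NNPP. intro Hnle.
      apply xnle_lt in Hnle.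
      assert (HJC' : J C').
      { split; auto. exists C'. split; auto. split; [auto|split].
        intros x Hx. apply Hs in Hx; apply Hx.
        destruct (nu C'), (xmul (Fin q) (tau C')); simpl in *; auto; lra. }
      assert (Hz : tau C' = Fin 0).
      { apply negl_tau0 with B; auto. apply (negl_sub _ _ _ _ (HLp C' HJC')).
        intros x Hx. split; auto. intro HL. apply Hs in Hx. apply Hx. auto. }
      apply (xlt_nle _ _ Hnle). rewrite Hz. simpl. rewrite Rmult_0_r. eapply mu_nonneg; eauto. }
  apply xle_trans with (nu (fun x => M0 x \/ C x)).
  - apply (mu_mono B); auto. apply B_union; auto. intros x Hx.
    destruct (classic (M0 x)); [left|right]; auto. split; auto.
  - apply (mu_union_le B); auto.
    + apply xle_trans with (xmul (Fin q) (tau M0)); auto. apply xmul_mono; auto.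
      eapply mu_nonneg; eauto. apply (mu_mono B); auto.
    + rewrite (ac_zero B tau nu C); auto. apply xmul_nonneg; auto. eapply mu_nonneg; eauto.
Qed.

Lemma B_cinter {E} (B : set E -> Prop) (P : nat -> set E) : sigma_algebra B ->
  (forall n, B (P n)) -> B (fun x => forall n, P n x).
Proof.
  intros HB HP. apply (B_ext B (fun x => ~ exists n, ~ P n x)).
  - apply (B_compl B (fun x => exists n, ~ P n x)); auto. apply B_cunion; auto.
    intro n. apply (B_compl B (P n)); auto.
  - intro x. split. intros H n. apply NNPP. intro; apply H; eauto.
    intros H [n Hn]; auto.
Qed.

Lemma rn_upper {E} (B : set E -> Prop) tau nu (V : nat -> nat -> set E) A t :
  sigma_algebra B -> sigma_maxitive B tau -> sigma_maxitive B nu ->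
  (forall n m, Hq B tau nu (dd n m) (V n m)) -> B A -> 0 <= t ->
  xle (xmul (Fin t) (tau (fun x => A x /\ xlt (Fin t) (cfun V x)))) (nu A).
Proof.
  intros HB Ht Hn HV HA Ht0.
  assert (HVB : forall n m, B (V n m)) by (intros; apply HV).
  destruct (G_H B tau nu V t HB Ht Hn HV Ht0) as [HG1 HG2].
  assert (HAG : B (fun x => A x /\ xlt (Fin t) (cfun V x))) by (apply B_inter; auto).
  apply xle_trans with (nu (fun x => A x /\ xlt (Fin t) (cfun V x))).
  - apply HG2; auto. intros x [_ H]; auto.
  - apply (mu_mono B); auto. intros x [H _]; auto.
Qed.

Lemma rn_least_delta {E} (B : set E -> Prop) tau nu (V : nat -> nat -> set E) (F : nat -> set E) A r d :
  sigma_algebra B -> sigma_maxitive B tau -> sigma_maxitive B nu -> abs_cont B nu tau ->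
  sigma_principal B tau ->
  (forall n, B (F n)) -> (forall n, xlt (tau (F n)) PInf) -> (forall x, exists n, F n x) ->
  (forall n m, Hq B tau nu (dd n m) (V n m)) ->
  (forall n m S, Hq B tau nu (dd n m) S -> negligible B tau (fun x => S x /\ ~ V n m x)) ->
  B A -> 0 <= r -> 0 < d ->
  (forall t, 0 <= t -> xle (xmul (Fin t) (tau (fun x => A x /\ xlt (Fin t) (cfun V x)))) (Fin r)) ->
  xle (nu A) (Fin ((1 + 2 * d) * r)).
Proof.
  intros HB Ht Hn Hac Hpr HFB HFf HFc HV HVp HA Hr Hd Hub.
  assert (HVB : forall n m, B (V n m)) by (intros; apply HV).
  assert (HGB : forall t, 0 <= t -> B (fun x => xlt (Fin t) (cfun V x))) by (intros; apply G_B; auto).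
  assert (Hw : 0 <= (1 + 2 * d) * r) by nra.
  set (Pinf := fun x => A x /\ forall k : nat, xlt (Fin (INR k)) (cfun V x)).
  assert (HPinfB : B Pinf).
  { apply B_inter; auto. apply (B_cinter B (fun k x => xlt (Fin (INR k)) (cfun V x))); auto.
    intro k; apply HGB, pos_INR. }
  assert (HPinf : nu Pinf = Fin 0).
  { apply (ac_zero B tau nu); auto.
    assert (Hle : forall t, 0 < t -> xle (xmul (Fin t) (tau Pinf)) (Fin r)).
    { intros t Ht0. eapply xle_trans; [|apply (Hub t); lra].
      apply xmul_mono; [lra| eapply mu_nonneg; eauto|].
      apply (mu_mono B); auto. apply B_inter; auto. apply HGB; lra.
      intros x [HAx Hk]. split; auto. rewrite (proj2 (c_inf V x) Hk). simpl; auto. }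
    destruct (tau Pinf) as [z|] eqn:Hz.
    - assert (Hz0 : 0 <= z) by (pose proof (mu_nonneg B tau Pinf Ht HPinfB) as H; rewrite Hz in H; exact H).
      destruct (Req_dec z 0) as [->|Hnz]; auto.
      specialize (Hle ((r + 1) / z)). simpl in Hle.
      assert (Hpos : 0 < (r + 1) / z) by (apply Rdiv_lt_0_compat; lra).
      specialize (Hle Hpos). replace ((r + 1) / z * z) with (r + 1) in Hle by (field; lra). lra.
    - specialize (Hle 1 Rlt_0_1). rewrite xmul_Pinf in Hle by lra. simpl in Hle; tauto. }
  set (P0 := fun k x => (A x /\ F k x) /\ ~ xlt (Fin 0) (cfun V x)).
  assert (HP0B : forall k, B (P0 k)).
  { intro k. apply B_diff; auto. apply B_inter; auto. apply HGB; lra. }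
  assert (HP0 : forall k, nu (P0 k) = Fin 0).
  { intro k. 
    assert (Htf : xle (tau (P0 k)) (tau (F k))).
    { apply (mu_mono B); auto. intros x [[_ H] _]; auto. }
    pose proof (HFf k) as Hfk.
    destruct (tau (P0 k)) as [z|] eqn:Hz; [|destruct (tau (F k)); simpl in *; tauto].
    assert (Hz0 : 0 <= z) by (pose proof (mu_nonneg B tau (P0 k) Ht (HP0B k)) as H; rewrite Hz in H; exact H).
    assert (HD : forall m, xle (nu (P0 k)) (Fin (dd 1 m * z))).
    { intro m. change (Fin (dd 1 m * z)) with (xmul (Fin (dd 1 m)) (Fin z)).
      rewrite <- Hz. apply (lemD B tau nu V); auto.
      intros x [_ Hx] Hv. apply Hx. apply c_level; [lra|]. exists 1%nat, m. split; auto.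
      unfold dd. simpl. unfold Rdiv. rewrite Rmult_1_l. apply inv_pos_k. }
    apply (mu_zero_of_le B); auto.
    pose proof (mu_nonneg B nu (P0 k) Hn (HP0B k)) as Hnn.
    destruct (nu (P0 k)) as [a|] eqn:Ha; [|specialize (HD 0%nat); simpl in HD; tauto].
    simpl in Hnn |- *. apply Rnot_lt_le. intro Hapos.
    destruct (arch_inv (a / (z + 1))) as [m Hm]. apply Rdiv_lt_0_compat; lra.
    specialize (HD m). simpl in HD. unfold dd in HD. simpl in HD.
    unfold Rdiv in HD. rewrite Rmult_1_l in HD.
    pose proof (inv_pos_k m).
    apply (Rmult_lt_compat_r (z + 1)) in Hm; [|lra].
    replace (a / (z + 1) * (z + 1)) with a in Hm by (field; lra). nra. }
  set (Pm := fun n m x => (A x /\ xlt (Fin (dd n m)) (cfun V x)) /\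
                          ~ xlt (Fin ((1 + d) * dd n m)) (cfun V x)).
  assert (HPmB : forall n m, B (Pm n m)).
  { intros n m. pose proof (dd_nonneg n m). apply B_diff; auto. apply B_inter; auto.
    apply HGB; nra. }
  assert (HPm : forall n m, xle (nu (Pm n m)) (Fin ((1 + 2 * d) * r))).
  { intros n m. pose proof (dd_nonneg n m) as Hs0. set (s := dd n m) in *.
    destruct (Req_dec s 0) as [Hs|Hs].
    - rewrite (mu_empty B nu); auto. simpl; auto.
      intros x [[_ H1] H2]. apply H2. unfold s in Hs. rewrite Hs in H1 |- *. rewrite Rmult_0_r. exact H1.
    - destruct (density ((1 + d) * s) ((1 + 2 * d) * s)) as [n' [m' [Hd1 Hd2]]]; [nra|nra|].
      assert (HD := lemD B tau nu V n' m' (Pm n m) HB Ht Hn Hac Hpr (HVp n' m') (HPmB n m)).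
      assert (HD' : xle (nu (Pm n m)) (xmul (Fin (dd n' m')) (tau (Pm n m)))).
      { apply HD. intros x [_ Hx] Hv. apply Hx. apply c_level; [unfold s in Hs0; nra|].
        exists n', m'. split; auto. }
      specialize (Hub s Hs0).
      assert (HAGB : B (fun x => A x /\ xlt (Fin s) (cfun V x))) by (apply B_inter; auto).
      assert (Hmono : xle (tau (Pm n m)) (tau (fun x => A x /\ xlt (Fin s) (cfun V x)))).
      { apply (mu_mono B); auto. intros x [H _]; auto. }
      pose proof (mu_nonneg B tau (Pm n m) Ht (HPmB n m)) as Hz0.
      destruct (tau (fun x => A x /\ xlt (Fin s) (cfun V x))) as [y|] eqn:Hy.
      + destruct (tau (Pm n m)) as [z|]; simpl in Hmono, Hz0; [|tauto].
        simpl in Hub, HD'. eapply xle_trans; [exact HD'|]. simpl.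
        assert (dd n' m' * z <= (1 + 2 * d) * s * y) by (apply Rmult_le_compat; nra).
        nra.
      + rewrite xmul_Pinf in Hub by lra. simpl in Hub; tauto. }
  set (U := fun x => Pinf x \/ ((exists k, P0 k x) \/ (exists n, (fun x => exists m, Pm n m x) x))).
  assert (HUB : B U).
  { apply B_union; auto. apply B_union; auto. apply B_cunion; auto.
    apply B_cunion; auto. intro n; apply B_cunion; auto. }
  apply xle_trans with (nu U).
  - apply (mu_mono B); auto. intros x HAx. unfold U.
    destruct (cfun V x) as [v|] eqn:Hc.
    + destruct (Rle_dec v 0) as [Hv|Hv].
      * right; left. destruct (HFc x) as [k Hk]. exists k. unfold P0. rewrite Hc. simpl.
        split; auto. lra.
      * right; right. destruct (density (v / (1 + d)) v) as [n [m [H1 H2]]].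
        apply Rlt_le, Rdiv_lt_0_compat; lra.
        apply (Rmult_lt_reg_r (1 + d)); [lra|]. unfold Rdiv. rewrite Rmult_assoc, Rinv_l by lra. nra.
        exists n, m. unfold Pm. rewrite Hc. simpl. split; auto.
        apply Rle_not_lt. apply (Rmult_lt_compat_r (1 + d)) in H1; [|lra].
        unfold Rdiv in H1. rewrite Rmult_assoc, Rinv_l in H1 by lra. lra.
    + left. split; auto. intro k. rewrite Hc. simpl; auto.
  - apply (mu_union_le B); auto.
    + apply B_union; auto. apply B_cunion; auto. apply B_cunion; auto. intro n; apply B_cunion; auto.
    + rewrite HPinf. simpl; auto.
    + apply (mu_union_le B); auto. apply B_cunion; auto. apply B_cunion; auto. intro n; apply B_cunion; auto.
      * apply (mu_cunion_le B); auto. intro k. rewrite HP0. simpl; auto.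
      * apply (mu_cunion_le B); auto. intro n; apply B_cunion; auto.
        intro n. apply (mu_cunion_le B); auto.
Qed.

Lemma limit_delta a r : 0 <= r -> xle (Fin 0) a ->
  (forall d, 0 < d -> xle a (Fin ((1 + 2 * d) * r))) -> xle a (Fin r).
Proof.
  intros Hr Ha H. destruct a as [a|].
  - simpl. apply Rnot_lt_le. intro Hlt.
    set (d := (a - r) / (2 * (a + r + 1))).
    assert (Hpos : 0 < a + r + 1) by (simpl in Ha; lra).
    assert (Hd : 0 < d) by (unfold d; apply Rdiv_lt_0_compat; lra).
    specialize (H d Hd). simpl in H.
    assert (Heq : 2 * d * (a + r + 1) = a - r) by (unfold d; field; lra).
    nra.
  - specialize (H 1 Rlt_0_1). simpl in H. tauto.
Qed.

Lemma bwd {E} (B : set E -> Prop) tau : sigma_algebra B -> sigma_maxitive B tau ->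
  sigma_finite B tau -> sigma_principal B tau -> RN_property B tau.
Proof.
  intros HB Ht [F [HFB [HFf HFc]]] Hpr nu Hn Hac.
  assert (HV0 : forall n, exists f : nat -> set E, forall m,
            Hq B tau nu (dd n m) (f m) /\
            forall S, Hq B tau nu (dd n m) S -> negligible B tau (fun x => S x /\ ~ f m x)).
  { intro n. apply (choice_nat (fun m S0 => Hq B tau nu (dd n m) S0 /\ forall S, Hq B tau nu (dd n m) S -> negligible B tau (fun x => S x /\ ~ S0 x))). intro m.
    apply (Hpr _ (Hq_ideal B tau nu (dd n m) HB Ht Hn (dd_nonneg n m))). }
  destruct (choice_nat _ HV0) as [V HV].
  exists (cfun V). split.
  - split. intro x; apply c_nonneg. intros t Ht0. apply G_B; auto. intros n m; apply (HV n m).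
  - intros A HA. split.
    + intros v [t [Ht0 ->]]. apply (rn_upper B); auto. intros n m; apply (HV n m).
    + intros u Hu. destruct u as [r|]; [|destruct (nu A); simpl; auto].
      assert (Hr : 0 <= r).
      { specialize (Hu (xmul (Fin 0) (tau (fun x => A x /\ xlt (Fin 0) (cfun V x))))).
        rewrite xmul_0l in Hu. apply Hu. exists 0; split; [lra|]. rewrite xmul_0l; auto. }
      apply limit_delta; auto. eapply mu_nonneg; eauto.
      intros d Hd. apply (rn_least_delta B tau nu V F); auto.
      * intros n m; apply (HV n m).
      * intros n m; apply (HV n m).
      * intros t Ht0. apply Hu. eauto.
Qed.

Theorem mainTheorem2 (E : Type) (B : set E -> Prop) (tau : set E -> xR)
  (hE : inhabited E) (hB : sigma_algebra B) (htau : sigma_maxitive B tau) :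
  RN_property B tau <-> (sigma_finite B tau /\ sigma_principal B tau).
Proof.
  split.
  - intro H. split. apply RN_sigma_finite; auto. apply RN_sigma_principal; auto.
  - intros [H1 H2]. apply bwd; auto.
Qed.
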